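(* Let $S\subset\mathbb{R}^n$ be a set of positive Lebesgue measure and let $P,Q$ be two matrix-valued polynomials on $\mathbb{R}^n$. Suppose that there exists $s$ such that $\operatorname{rank}P(\xi)+\operatorname{rank}Q(\xi)=s$ for all $\xi\in S$. Then both $P$ and $Q$ have constant rank on $S$, i.e. $\xi\mapsto\operatorname{rank}P(\xi)$ and $\xi\mapsto\operatorname{rank}Q(\xi)$ are constant on $S$.
   Context: A matrix-valued polynomial on $\mathbb{R}^n$ is a map $\mathbb{R}^n\to\mathbb{R}^{N\times m}$ each of whose entries is a polynomial in $\xi\in\mathbb{R}^n$. *)

(* Defs.v *)
From HB Require Import structures.
From mathcomp Require Import all_boot all_order all_algebra.
From mathcomp Require Import all_classical all_reals all_analysis.
From mathcomp Require mpoly.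
Set Implicit Arguments. Unset Strict Implicit. Unset Printing Implicit Defensive.
Import Order.TTheory GRing.Theory Num.Theory.
Local Open Scope classical_set_scope.
Local Open Scope ring_scope.

Definition box (R : realType) (n : nat) (a b : 'rV[R]_n) : set 'rV[R]_n :=
  [set x | forall i : 'I_n, a ord0 i <= x ord0 i <= b ord0 i].

Definition box_vol (R : realType) (n : nat) (a b : 'rV[R]_n) : R :=
  \prod_(i < n) (b ord0 i - a ord0 i).

(* Lebesgue outer measure on R^n: infimum of the total volume of countable
   covers by closed boxes.  For Lebesgue measurable sets it is the Lebesgue
   measure. *)
Definition lebesgue_outer (R : realType) (n : nat) (S : set 'rV[R]_n) : \bar R :=
  ereal_inf [set v : \bar R | exists a b : nat -> 'rV[R]_n,
     [/\ (forall k (i : 'I_n), a k ord0 i <= b k ord0 i),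
         S `<=` \bigcup_k box (a k) (b k) &
         v = (\sum_(0 <= k <oo) (box_vol (a k) (b k))%:E)%E]].

Definition polymx_eval (R : realType) (n N m : nat)
    (P : 'M[mpoly.mpoly n R]_(N, m)) (xi : 'rV[R]_n) : 'M[R]_(N, m) :=
  map_mx (mpoly.meval (fun i : 'I_n => xi ord0 i)) P.

Definition polymx_rank (R : realType) (n N m : nat)
    (P : 'M[mpoly.mpoly n R]_(N, m)) (xi : 'rV[R]_n) : nat :=
  \rank (polymx_eval P xi).

(* Main.v *)
Require Import Defs.
From HB Require Import structures.
From mathcomp Require Import all_boot all_order all_algebra.
From mathcomp Require Import all_classical all_reals all_analysis.
From mathcomp Require mpoly.
From mathcomp Require Import ring lra perm zify.
Import Order.TTheory GRing.Theory Num.Theory.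
Local Open Scope classical_set_scope.
Local Open Scope ring_scope.

Section Null.
Context {R : realType} {n : nat}.
Implicit Types (A B : set 'rV[R]_n).

Definition covers A (eps : R) := exists a b : nat -> 'rV[R]_n,
  [/\ (forall k i, a k ord0 i <= b k ord0 i),
      A `<=` \bigcup_k box (a k) (b k) &
      forall N, \sum_(k < N) box_vol (a k) (b k) <= eps].

Definition bnull A := forall eps : R, 0 < eps -> covers A eps.

Lemma box_vol_ge0 (a b : 'rV[R]_n) : (forall i, a ord0 i <= b ord0 i) -> 0 <= box_vol a b.
Proof. by move=> h; rewrite /box_vol; apply: prodr_ge0 => i _; rewrite subr_ge0. Qed.

Lemma outer_le_covers A eps : covers A eps -> (lebesgue_outer A <= eps%:E)%E.
Proof.
move=> [a [b [hab hA hs]]].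
apply: (@le_trans _ _ (\sum_(0 <= k <oo) (box_vol (a k) (b k))%:E)%E).
  apply: ereal_inf_lbound; exists a, b; split => //.
apply: lime_le.
  by apply: is_cvg_nneseries => k _ _; rewrite lee_fin box_vol_ge0.
apply: nearW => N /=; rewrite sumEFin lee_fin.
by rewrite big_mkord; apply: hs.
Qed.

Lemma bnull_outer A : bnull A -> ~ (0 < lebesgue_outer A)%E.
Proof.
move=> hA hpos.
have h1 := @outer_le_covers _ _ (hA 1 ltr01).
move: hpos h1; case E: (lebesgue_outer A) => [r| |] //= hpos h1.
have r0 : 0 < r by rewrite -lte_fin.
have := @outer_le_covers _ _ (hA (r / 2) (divr_gt0 r0 (ltr0n _ 2))).
rewrite E lee_fin => h2.
have : r / 2 < r by rewrite ltr_pdivrMr // ltr_pMr // ltr1n.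
by rewrite ltNge h2.
Qed.

Lemma bnull_sub A B : A `<=` B -> bnull B -> bnull A.
Proof.
move=> AB hB eps e0; case: (hB eps e0) => a [b [h1 h2 h3]].
by exists a, b; split => // x /AB /h2.
Qed.


Hypothesis n_gt0 : (0 < n)%N.

Lemma box_vol00 : box_vol (0 : 'rV[R]_n) 0 = 0.
Proof.
rewrite /box_vol (bigD1 (Ordinal n_gt0)) //= !mxE subrr mul0r //.
Qed.

Lemma covers_fin (I : finType) A eps (a b : I -> 'rV[R]_n) :
  (forall c i, a c ord0 i <= b c ord0 i) ->
  A `<=` (fun x => exists c, box (a c) (b c) x) ->
  \sum_c box_vol (a c) (b c) <= eps -> covers A eps.
Proof.
move=> hab hA hs.
pose a' k := if insub k : option 'I_#|I| is Some q then a (enum_val q) else 0.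
pose b' k := if insub k : option 'I_#|I| is Some q then b (enum_val q) else 0.
exists a', b'; split.
  move=> k i; rewrite /a' /b'; case: (insub k : option 'I_#|I|) => [q|]; first exact: hab.
  by rewrite mxE.
  move=> x /hA [c hc]; exists (enum_rank c) => //.
  by rewrite /a' /b' valK enum_rankK.
  move=> N.
  have v0 k : 0 <= box_vol (a' k) (b' k).
    by apply: box_vol_ge0 => i; rewrite /a' /b'; case: (insub k : option 'I_#|I|) => [q|]; rewrite ?mxE.
  rewrite -(big_mkord xpredT (fun k => box_vol (a' k) (b' k))).
  apply: (@le_trans _ _ (\sum_(0 <= k < N + #|I|) box_vol (a' k) (b' k))).
    rewrite (big_cat_nat (leq0n N) (leq_addr _ _)) /= lerDl.
    by apply: sumr_ge0 => k _.
  rewrite (big_cat_nat (leq0n #|I|) (leq_addl _ _)) /=.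
  rewrite [X in _ + X]big1_seq ?addr0; last first.
    move=> k /andP[_]; rewrite mem_index_iota => /andP[hk _].
    by rewrite /a' /b' insubF ?box_vol00 // ltnNge hk.
  apply: le_trans hs; rewrite big_mkord (big_enum_val (A := xpredT) (fun c => box_vol (a c) (b c))) /= le_eqVlt; apply/orP; left.
  apply/eqP; apply: eq_bigr => o _; rewrite /a' /b' valK //.
Qed.

Lemma covers_cst0 A eps : 0 <= eps -> A `<=` set0 -> covers A eps.
Proof.
move=> e0 hA; exists (fun _ => 0), (fun _ => 0); split.
  by move=> k i; rewrite mxE.
  by move=> x /hA.
  by move=> N; rewrite big1 // => k _; rewrite box_vol00.
Qed.

Lemma bnull_set0 A : A `<=` set0 -> bnull A.
Proof. by move=> hA eps e0; apply: covers_cst0 => //; apply: ltW. Qed.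

Lemma geom_sum (eps : R) P : \sum_(p < P) eps / 2 ^+ p.+1 = eps - eps / 2 ^+ P.
Proof.
elim: P => [|P IH]; first by rewrite big_ord0 expr0 divr1 subrr.
rewrite big_ord_recr /= IH -addrA; congr (_ + _).
rewrite exprS; field.
by rewrite expf_neq0 // pnatr_eq0.
Qed.

Lemma bnull_bigcup (I : countType) (A : I -> set 'rV[R]_n) :
  (forall i, bnull (A i)) -> bnull (\bigcup_i A i).
Proof.
move=> hA eps e0.
pose e (p : nat) := eps / 2 ^+ p.+1.
have e_gt0 p : 0 < e p by rewrite /e divr_gt0 // exprn_gt0.
have : forall i, exists ab : (nat -> 'rV[R]_n) * (nat -> 'rV[R]_n),
   [/\ (forall k j, ab.1 k ord0 j <= ab.2 k ord0 j),
      A i `<=` \bigcup_k box (ab.1 k) (ab.2 k) &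
      forall N, \sum_(k < N) box_vol (ab.1 k) (ab.2 k) <= e (pickle i)].
  move=> i; case: (hA i _ (e_gt0 (pickle i))) => a [b h]; by exists (a, b).
case/choice => F hF.
pose vol i j := box_vol ((F i).1 j) ((F i).2 j).
have vol_ge0 i j : 0 <= vol i j by apply: box_vol_ge0 => k; case: (hF i) => h _ _; apply: h.
pose a' k := if pickle_inv k : option (I * nat) is Some ij then (F ij.1).1 ij.2 else 0.
pose b' k := if pickle_inv k : option (I * nat) is Some ij then (F ij.1).2 ij.2 else 0.
pose v' k := if pickle_inv k : option (I * nat) is Some ij then vol ij.1 ij.2 else 0.
have vE k : box_vol (a' k) (b' k) = v' k.
  by rewrite /a' /b' /v'; case: (pickle_inv k) => [[i j]|] //; rewrite box_vol00.
exists a', b'; split.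
  move=> k i; rewrite /a' /b'; case: (pickle_inv k) => [[i' j]|]; last by rewrite mxE.
  by case: (hF i') => h _ _; apply: h.
  move=> x [i _ /=] hx; case: (hF i) => _ /(_ x hx) [j _ hxj] _.
  exists (pickle (i, j)) => //.
  by rewrite /a' /b' pickleK_inv.
move=> N; under eq_bigr do rewrite vE.
pose bnd k := if pickle_inv k : option (I * nat) is Some ij then maxn (pickle ij.1) ij.2 else 0%N.
pose P := (\max_(k < N) bnd k).+1.
pose G (k p j : nat) := if pickle_inv k : option (I * nat) is Some ij then
   (if (pickle ij.1 == p) && (ij.2 == j) then vol ij.1 ij.2 else 0) else 0.
have step1 : \sum_(k < N) v' k = \sum_(k < N) \sum_(p < P) \sum_(j < P) G k p j.
  apply: eq_bigr => k _; rewrite /v' /G.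
  case E: (pickle_inv k) => [[i j]|]; last by rewrite big1 // => p _; rewrite big1.
  have hb : (bnd k < P)%N.
    by rewrite ltnS; apply: (@leq_bigmax_cond _ _ _ k).
  have hp : (pickle i < P)%N.
    by apply: leq_ltn_trans hb; rewrite /bnd E leq_maxl.
  have hj : (j < P)%N.
    by apply: leq_ltn_trans hb; rewrite /bnd E leq_maxr.
  rewrite (bigD1 (Ordinal hp)) //= (bigD1 (Ordinal hj)) //= !eqxx /=.
  rewrite big1 ?addr0; last first.
    by move=> q /negPf hq; rewrite -[j == q]/(Ordinal hj == q) eq_sym hq.
  rewrite big1 ?addr0 // => q hq; rewrite big1 // => r _.
  by rewrite -[pickle i == q]/(Ordinal hp == q) eq_sym (negPf hq).
rewrite step1 exchange_big /=.
apply: (@le_trans _ _ (\sum_(p < P) e p)); last first.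
  by rewrite geom_sum gerBl; apply: divr_ge0; [apply: ltW | apply: exprn_ge0].
apply: ler_sum => p _; rewrite exchange_big /=.
case Ep: (@pickle_inv I p) => [i0|].
  have hp : pickle i0 = p by move: (@pickle_invK I p); rewrite Ep.
  apply: (@le_trans _ _ (\sum_(j < P) vol i0 j)).
    apply: ler_sum => j _.
    have hG k : G k p j = if k == pickle ((i0, nat_of_ord j) : I * nat) then vol i0 j else 0.
      rewrite /G; case E: (pickle_inv k) => [[i j']|].
        have hk : pickle (i, j') = k by move: (@pickle_invK (I * nat)%type k); rewrite E.
        case: eqP => /= [hi|hi].
          have ei : i = i0 by apply: (pcan_inj pickleK_inv); rewrite hi.
          subst i; case: eqP => [ej|ej]; first by subst j'; rewrite -hk eqxx.
          case: eqP => // hk2; exfalso; apply: ej.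
          by case: (pcan_inj pickleK_inv (etrans hk hk2)).
        case: eqP => // hk2; exfalso; apply: hi.
        by case: (pcan_inj pickleK_inv (etrans hk hk2)) => ->.
      case: eqP => // hk2; exfalso.
      by move: E; rewrite hk2 (@pickleK_inv (I * nat)%type).
    under eq_bigr do rewrite hG.
    case: (ltnP (pickle ((i0, nat_of_ord j) : I * nat)) N) => hN.
      rewrite (bigD1 (Ordinal hN)) //= eqxx big1 ?addr0 // => k hk.
      case: eqP => // hk2; exfalso; move/negP: hk; apply; apply/eqP/val_inj.
      by rewrite /= hk2.
    rewrite big1 // => k _; case: eqP => // hk; exfalso.
    by move: (ltn_ord k); rewrite hk ltnNge hN.
  by case: (hF i0) => _ _ h; rewrite -hp; apply: h.
rewrite big1; first exact: ltW.
move=> j _; rewrite big1 // => k _; rewrite /G.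
case E: (pickle_inv k) => [[i j']|] //.
case: eqP => //= hi; exfalso.
by move: Ep; rewrite -hi pickleK_inv.
Qed.

Lemma bnull_setU A B : bnull A -> bnull B -> bnull (A `|` B).
Proof.
move=> hA hB; apply: (@bnull_sub _ (\bigcup_(b : bool) (if b then A else B))).
  by move=> x [ax|bx]; [exists true | exists false].
by apply: bnull_bigcup => -[].
Qed.

End Null.

Set Implicit Arguments. Unset Strict Implicit. Unset Printing Implicit Defensive.

Section PF.
Context {R : realType} {n : nat}.

Definition upd (x : 'rV[R]_n) (i : 'I_n) (t : R) : 'rV[R]_n :=
  \row_j (if j == i then t else x ord0 j).

Lemma upd_id x i : upd x i (x ord0 i) = x.
Proof. by apply/rowP => j; rewrite mxE; case: eqP => // ->. Qed.

Lemma upd_upd x i s t : upd (upd x i s) i t = upd x i t.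
Proof. by apply/rowP => j; rewrite !mxE; case: eqP. Qed.

Lemma upd_i x i t : upd x i t ord0 i = t.
Proof. by rewrite mxE eqxx. Qed.

Fixpoint PF (d : nat) (f : 'rV[R]_n -> R) : Prop :=
  match d with
  | 0%N => exists c, forall x, f x = c
  | d.+1 => exists c (g : 'I_n -> 'rV[R]_n -> R),
      (forall j, PF d (g j)) /\ forall x, f x = c + \sum_j x ord0 j * g j x
  end.

Lemma PF_ext d f g : PF d f -> (forall x, f x = g x) -> PF d g.
Proof.
case: d => [[c hc] e|d [c [h [hg hf]]] e]; first by exists c => x; rewrite -e.
by exists c, h; split => // x; rewrite -e.
Qed.

Lemma PF_cst d c : PF d (fun _ => c).
Proof.
elim: d c => [|d IH] c; first by exists c.
exists c, (fun _ _ => 0); split => [j|x]; first exact: IH.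
by rewrite big1 ?addr0 // => j _; rewrite mulr0.
Qed.

Lemma PF_S d f : PF d f -> PF d.+1 f.
Proof.
elim: d f => [|d IH] f.
  case=> c hc; exists c, (fun _ _ => 0); split => [j|x]; first exact: (@PF_cst 0 0).
  by rewrite big1 ?addr0 // => j _; rewrite mulr0.
case=> c [g [hg hf]]; exists c, g; split => [j|//]; exact: IH (hg j).
Qed.

Lemma PF_le d d' f : (d <= d')%N -> PF d f -> PF d' f.
Proof.
move=> /subnK <-; elim: (d' - d)%N => [|k IH] //= h.
exact/PF_S/IH.
Qed.

Lemma PF_add d f g : PF d f -> PF d g -> PF d (fun x => f x + g x).
Proof.
elim: d f g => [|d IH] f g.
  by case=> c hc [c' hc']; exists (c + c') => x; rewrite hc hc'.
case=> c [h [hh hf]] [c' [h' [hh' hg]]].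
exists (c + c'), (fun j x => h j x + h' j x); split => [j|x]; first exact: IH _ _ (hh j) (hh' j).
rewrite hf hg -addrA -addrA; congr (_ + _); rewrite addrCA -big_split /=.
congr (_ + _); apply: eq_bigr => j _; ring.
Qed.

Lemma PF_scale d a f : PF d f -> PF d (fun x => a * f x).
Proof.
elim: d f => [|d IH] f.
  by case=> c hc; exists (a * c) => x; rewrite hc.
case=> c [h [hh hf]]; exists (a * c), (fun j x => a * h j x); split => [j|x].
  exact: IH _ (hh j).
rewrite hf mulrDr mulr_sumr; congr (_ + _); apply: eq_bigr => j _; ring.
Qed.

Lemma PF_sumx d (g : 'I_n -> 'rV[R]_n -> R) : (forall j, PF d (g j)) ->
  PF d.+1 (fun x => \sum_j x ord0 j * g j x).
Proof. by move=> hg; exists 0, g; split => // x; rewrite add0r. Qed.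

Lemma PF_mul a b f g : PF a f -> PF b g -> PF (a + b) (fun x => f x * g x).
Proof.
elim: a f => [|a IH] f.
  by case=> c hc hg; rewrite add0n; apply: (PF_ext (PF_scale c hg)) => x; rewrite hc.
case=> c [h [hh hf]] hg.
have h1 : PF (a + b).+1 (fun x => c * g x).
  by apply: (PF_le _ (PF_scale c hg)); rewrite leqW // leq_addl.
have h2 := PF_sumx (fun j => IH _ (hh j) hg).
apply: (PF_ext (PF_add h1 h2)) => x.
rewrite hf mulrDl mulr_suml; congr (_ + _); apply: eq_bigr => j _; ring.
Qed.

Lemma PF_coord d j : PF d.+1 (fun x => x ord0 j).
Proof.
apply: (PF_ext (PF_sumx (d := d) (fun k => @PF_cst d (if k == j then 1 else 0)))) => x.
rewrite (bigD1 j) //= eqxx mulr1 big1 ?addr0 // => k /negPf ->; rewrite mulr0 //.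
Qed.

Definition PFany f := exists d, PF d f.

Lemma PFany_cst c : PFany (fun _ => c).
Proof. by exists 0%N; exists c. Qed.

Lemma PFany_coord j : PFany (fun x => x ord0 j).
Proof. by exists 1%N; apply: PF_coord. Qed.

Lemma PFany_add f g : PFany f -> PFany g -> PFany (fun x => f x + g x).
Proof.
case=> a ha [b hb]; exists (a + b)%N; apply: PF_add.
  exact: PF_le (leq_addr _ _) ha.
exact: PF_le (leq_addl _ _) hb.
Qed.

Lemma PFany_mul f g : PFany f -> PFany g -> PFany (fun x => f x * g x).
Proof. by case=> a ha [b hb]; exists (a + b)%N; apply: PF_mul. Qed.

Lemma PFany_ext f g : PFany f -> (forall x, f x = g x) -> PFany g.
Proof. by case=> d hd e; exists d; apply: PF_ext hd e. Qed.

Lemma PFany_sum (I : Type) (r : seq I) (P : pred I) (F : I -> 'rV[R]_n -> R) :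
  (forall i, PFany (F i)) -> PFany (fun x => \sum_(i <- r | P i) F i x).
Proof.
move=> hF; elim: r => [|a r IH].
  by apply: (PFany_ext (PFany_cst 0)) => x; rewrite big_nil.
apply: (@PFany_ext (fun x => (if P a then F a x else 0) + \sum_(i <- r | P i) F i x)).
  apply: PFany_add IH; case: (P a) => //; exact: PFany_cst.
by move=> x; rewrite big_cons; case: (P a) => //; rewrite add0r.
Qed.

Lemma PFany_prod (I : Type) (r : seq I) (P : pred I) (F : I -> 'rV[R]_n -> R) :
  (forall i, PFany (F i)) -> PFany (fun x => \prod_(i <- r | P i) F i x).
Proof.
move=> hF; elim: r => [|a r IH].
  by apply: (PFany_ext (PFany_cst 1)) => x; rewrite big_nil.
apply: (@PFany_ext (fun x => (if P a then F a x else 1) * \prod_(i <- r | P i) F i x)).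
  apply: PFany_mul IH; case: (P a) => //; exact: PFany_cst.
by move=> x; rewrite big_cons; case: (P a) => //; rewrite mul1r.
Qed.

Lemma PFany_exp f k : PFany f -> PFany (fun x => f x ^+ k).
Proof.
move=> hf; elim: k => [|k IH]; first by apply: (PFany_ext (PFany_cst 1)) => x.
by apply: (PFany_ext (PFany_mul hf IH)) => x; rewrite exprS.
Qed.

Lemma PFany_meval (p : mpoly.mpoly n R) :
  PFany (fun x => mpoly.meval (fun i : 'I_n => x ord0 i) p).
Proof.
have h : PFany (fun x => \sum_(m <- mpoly.msupp p) mpoly.mcoeff m p * \prod_i x ord0 i ^+ mpoly.fun_of_multinom m i).
  apply: PFany_sum => m; apply: PFany_mul; first exact: PFany_cst.
  by apply: PFany_prod => i; apply: PFany_exp; apply: PFany_coord.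
apply: (PFany_ext h) => x; rewrite mpoly.mevalE //.
Qed.


Definition pder (i : 'I_n) (f f' : 'rV[R]_n -> R) :=
  forall x : 'rV[R]_n, is_derive (x ord0 i) (1 : R) (fun t => f (upd x i t)) (f' x).

Lemma is_derive_coord (x : 'rV[R]_n) i j :
  is_derive (x ord0 i) (1 : R) (fun t => upd x i t ord0 j) (if j == i then 1 else 0).
Proof.
case: eqP => [->|hji].
  have -> : (fun t => upd x i t ord0 i) = id by apply: funext => t; rewrite upd_i.
  exact: is_derive_id.
have -> : (fun t => upd x i t ord0 j) = cst (x ord0 j).
  by apply: funext => t; rewrite mxE; move/eqP/negPf: hji => ->.
exact: is_derive_cst.
Qed.

Lemma is_derive_mulfun (x : R) (f g : R -> R) df dg :
  is_derive x (1 : R) f df -> is_derive x (1 : R) g dg ->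
  is_derive x (1 : R) (fun t => f t * g t) (f x * dg + g x * df).
Proof. by move=> h1 h2; have := is_deriveM h1 h2. Qed.


Lemma PF_deriv d f : PF d f -> forall i, exists f',
  [/\ PF d.-1 f', (d = 0%N -> forall x, f' x = 0) & pder i f f'].
Proof.
elim: d f => [|d IH] f.
  case=> c hc i; exists (fun _ => 0); split => //; first exact: (@PF_cst 0 0).
  move=> x; have -> : (fun t => f (upd x i t)) = cst c by apply: funext => t; rewrite hc.
  exact: is_derive_cst.
case=> c [g [hg hf]] i.
have [g' hg'] := fin_all_exists (fun j => IH _ (hg j) i).
exists (fun x => g i x + \sum_j x ord0 j * g' j x); split => //.
- case: d IH hg g' hg' {hf} => [|d] IH hg g' hg'.
    apply: (@PF_ext 0 _ _ (hg i)) => x; rewrite big1 ?addr0 // => j _.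
    by case: (hg' j) => _ -> //; rewrite mulr0.
  apply: (@PF_add d.+1); first exact: hg i.
  by apply: PF_sumx => j; case: (hg' j).
- move=> x.
  have -> : (fun t => f (upd x i t)) =
      cst c + \sum_(j < n) (fun t => upd x i t ord0 j * g j (upd x i t)).
    by apply: funext => t; rewrite hf fct_sumE.
  have hj j : is_derive (x ord0 i) (1 : R) (fun t => upd x i t ord0 j * g j (upd x i t))
      (upd x i (x ord0 i) ord0 j * g' j x + g j (upd x i (x ord0 i)) * (if j == i then 1 else 0)).
    apply: is_derive_mulfun; first exact: is_derive_coord.
    by case: (hg' j) => _ _; apply.
  have hs := is_derive_sum hj.
  have hc := is_deriveD (is_derive_cst c (x ord0 i) 1) hs.
  apply: (is_derive_eq hc).
  rewrite add0r upd_id big_split /= addrC; congr (_ + _).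
  rewrite (bigD1 i) //= eqxx mulr1 big1 ?addr0 // => j /negPf ->.
  by rewrite mulr0.
Qed.


Lemma PF_bound d f M : PF d f -> exists B, forall x : 'rV[R]_n,
  (forall j, `|x ord0 j| <= M) -> `|f x| <= B.
Proof.
elim: d f => [|d IH] f.
  by case=> c hc; exists `|c| => x _; rewrite hc.
case=> c [g [hg hf]].
have [B hB] := fin_all_exists (fun j => IH _ (hg j)).
exists (`|c| + \sum_j M * B j) => x hx; rewrite hf.
apply: (le_trans (ler_normD _ _)); rewrite lerD2l.
apply: (le_trans (ler_norm_sum _ _ _)); apply: ler_sum => j _.
by rewrite normrM; apply: ler_pM => //; apply: hB.
Qed.

Lemma mvt_coord i f f' (y : 'rV[R]_n) t : pder i f f' ->
  exists c, ((y ord0 i <= c <= t) \/ (t <= c <= y ord0 i)) /\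
    f (upd y i t) - f y = f' (upd y i c) * (t - y ord0 i).
Proof.
move=> hd.
pose phi s := f (upd y i s).
have hphi s : is_derive s (1 : R) phi (f' (upd y i s)).
  have := hd (upd y i s); rewrite upd_i.
  have -> : (fun t0 => f (upd (upd y i s) i t0)) = phi.
    by apply: funext => t0; rewrite upd_upd.
  by [].
have cont a b : {in `[a, b]%R, forall x, derivable phi x 1}.
  by move=> s _; exact: (@ex_derive _ _ _ _ _ _ _ (hphi s)).
have phiy : phi (y ord0 i) = f y by rewrite /phi upd_id.
case: (lerP (y ord0 i) t) => hyt.
  have [c hc e] := MVT_segment hyt (fun s _ => hphi s) (derivable_within_continuous (cont _ _)).
  exists c; split; first by left; rewrite in_itv /= in hc.
  by rewrite -phiy -e.
have [c hc e] := MVT_segment (ltW hyt) (fun s _ => hphi s) (derivable_within_continuous (cont _ _)).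
exists c; split; first by right; rewrite in_itv /= in hc.
rewrite -phiy; apply: (@oppr_inj _); rewrite opprB e; ring.
Qed.

Lemma lip_box f (a b : 'rV[R]_n) L :
  (forall j, exists f', pder j f f' /\ forall y, box a b y -> `|f' y| <= L) ->
  forall u v, box a b u -> box a b v ->
    `|f u - f v| <= L * \sum_j `|u ord0 j - v ord0 j|.
Proof.
move=> hd u v hu hv.
pose w (k : nat) : 'rV[R]_n := \row_j (if (j < k)%N then u ord0 j else v ord0 j).
have hw k : box a b (w k).
  by move=> j; rewrite mxE; case: ifP => _; [apply: hu | apply: hv].
have key k : (k <= n)%N -> `|f (w k) - f v| <=
    L * \sum_(j < n | (j < k)%N) `|u ord0 j - v ord0 j|.
  elim: k => [_|k IH hk].
    have -> : w 0%N = v by apply/rowP => j; rewrite mxE.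
    by rewrite subrr normr0 big_pred0 ?mulr0 // => j.
  pose o := Ordinal hk.
  have ew : w k.+1 = upd (w k) o (u ord0 o).
    apply/rowP => j; rewrite !mxE ltnS leq_eqVlt -val_eqE /=.
    case: eqP => [hj|_] //=; by rewrite (_ : j = o) //; apply: val_inj.
  have wo : w k ord0 o = v ord0 o by rewrite mxE ltnn.
  have [f' [hf' hL]] := hd o.
  have [c [hc e]] := mvt_coord (w k) (u ord0 o) hf'.
  have hbox : box a b (upd (w k) o c).
    move=> j; rewrite mxE; case: eqP => [->|_]; last exact: hw.
    have := hu o; have := hv o; rewrite wo in hc.
    case: hc => /andP[h1 h2] /andP[h3 h4] /andP[h5 h6]; apply/andP; split.
    - exact: le_trans h3 h1.
    - exact: le_trans h2 h6.
    - exact: le_trans h5 h1.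
    - exact: le_trans h2 h4.
  have -> : \sum_(j < n | (j < k.+1)%N) `|u ord0 j - v ord0 j| =
      `|u ord0 o - v ord0 o| + \sum_(j < n | (j < k)%N) `|u ord0 j - v ord0 j|.
    rewrite (bigD1 o) //=; congr (_ + _); apply: eq_bigl => j.
    by rewrite ltnS leq_eqVlt -val_eqE /=; case: (ltngtP j k).
  rewrite mulrDr.
  rewrite (_ : f (w k.+1) - f v = (f (w k.+1) - f (w k)) + (f (w k) - f v)); last by ring.
  apply: (le_trans (ler_normD _ _)); apply: lerD; last exact: IH (ltnW hk).
  rewrite ew e normrM -wo; apply: ler_wpM2r => //; exact: hL.
have -> : f u = f (w n) by congr f; apply/rowP => j; rewrite mxE ltn_ord.
apply: le_trans (key n (leqnn n)) _.
rewrite le_eqVlt; apply/orP; left; apply/eqP; congr (_ * _).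
by rewrite big_mkcond /=; apply: eq_bigr => j _; rewrite ltn_ord.
Qed.

End PF.

Lemma cell_idx {R : realType} (q s x : R) (K : nat) : 0 < s -> (0 < K)%N ->
  q <= x <= q + s -> exists k : 'I_K,
    q + k%:R * (s / K%:R) <= x <= q + k.+1%:R * (s / K%:R).
Proof.
move=> s0 K0 /andP[h1 h2].
have K0' : 0 < K%:R :> R by rewrite ltr0n.
pose h := s / K%:R.
have h0 : 0 < h by rewrite divr_gt0.
pose t := (x - q) / h.
have t0 : 0 <= t by rewrite divr_ge0 // ?subr_ge0 // ltW.
have tK : t <= K%:R.
  by rewrite ler_pdivrMr // /h mulrCA divff ?mulr1 ?lerBlDl // gt_eqF.
have xt : x = q + t * h by rewrite /t divfK ?gt_eqF // addrC subrK.
have [ht1 ht2] := andP (truncn_itv t0).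
have hk : (minn (Num.trunc t) K.-1 < K)%N by rewrite gtn_min prednK // leqnn orbT.
exists (Ordinal hk); rewrite xt /=; apply/andP; split.
  rewrite lerD2l ler_pM2r //; apply: le_trans ht1; rewrite ler_nat geq_minl //.
rewrite lerD2l ler_pM2r //.
case: (leqP (Num.trunc t) K.-1) => hle.
  by apply: ltW.
by rewrite prednK.
Qed.

Section Grid.
Context {R : realType} {n : nat}.
Hypothesis n_gt0 : (0 < n)%N.

Definition cube (q : 'rV[R]_n) (s : R) := box q (\row_j (q ord0 j + s)).

Lemma cubeP q s x : cube q s x <-> forall j, q ord0 j <= x ord0 j <= q ord0 j + s.
Proof. by split => h j; move: (h j); rewrite mxE. Qed.


Lemma abs_cell (a h x p : R) : a <= x <= a + h -> a <= p <= a + h -> `|x - p| <= h.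
Proof. move=> /andP[h1 h2] /andP[h3 h4]; rewrite ler_norml; apply/andP; split; lra. Qed.

Lemma abs_cellk (q h x p : R) (k : nat) :
  q + k%:R * h <= x <= q + k.+1%:R * h -> q + k%:R * h <= p <= q + k.+1%:R * h ->
  `|x - p| <= h.
Proof. by rewrite -addn1 natrD mulrDl mul1r addrA; apply: abs_cell. Qed.

Lemma exists_K (X eps : R) : 0 < eps -> exists K : nat, (0 < K)%N /\ X / K%:R <= eps.
Proof.
move=> e0; case: (lerP X 0) => hX.
  exists 1%N; split => //; rewrite divr1; apply: le_trans hX _; exact: ltW.
have hb := archi_boundP (ltW (divr_gt0 hX e0)).
exists (Num.Def.archi_bound (X / eps)).+1; split => //.
rewrite ler_pdivrMr ?ltr0n // -ler_pdivrMl // mulrC; apply: ltW; apply: lt_le_trans hb _.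
by rewrite ler_nat.
Qed.

Lemma bnull_lipgraph (A : set 'rV[R]_n) (q : 'rV[R]_n) (s C : R) (i : 'I_n) :
  0 < s -> 0 <= C -> A `<=` cube q s ->
  (forall x y, A x -> A y ->
     `|x ord0 i - y ord0 i| <= C * \sum_(j | j != i) `|x ord0 j - y ord0 j|) ->
  bnull A.
Proof.
move=> s0 C0 hAQ hlip eps e0.
have [K [K0 hK]] := exists_K (2 * C * n%:R * s * s ^+ n.-1) e0.
pose h := s / K%:R.
have h0 : 0 < h by rewrite divr_gt0 // ltr0n.
pose W := C * (n%:R * h).
have W0 : 0 <= W by rewrite mulr_ge0 // mulr_ge0 // ltW.
pose g (j : 'I_n) (k : 'I_K) : R := if j == i then (if (k == 0 :> nat) then 2 * W else 0) else h.
have g0 j k : 0 <= g j k.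
  rewrite /g; case: ifP => _; last exact: ltW.
  by case: ifP => _ //; apply: mulr_ge0.
pose col (c : {ffun 'I_n -> 'I_K}) (x : 'rV[R]_n) := forall j, j != i ->
  q ord0 j + (c j)%:R * h <= x ord0 j <= q ord0 j + (c j).+1%:R * h.
have hF : forall c : {ffun 'I_n -> 'I_K}, exists ab : 'rV[R]_n * 'rV[R]_n,
  [/\ forall j, ab.1 ord0 j <= ab.2 ord0 j,
      box_vol ab.1 ab.2 <= \prod_j g j (c j) &
      forall x, A x -> (c i = 0 :> nat) -> col c x -> box ab.1 ab.2 x].
  move=> c; case: (pselect ((c i = 0 :> nat) /\ exists p, A p /\ col c p)); last first.
    move=> hn; exists (0, 0); split => /=.
    - by move=> j; rewrite mxE.
    - by rewrite box_vol00 //; apply: prodr_ge0 => j _.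
    - by move=> x hx hci hc; exfalso; apply: hn; split => //; exists x.
  case=> hci [p [hp hpc]].
  exists (\row_j (if j == i then p ord0 i - W else q ord0 j + (c j)%:R * h),
          \row_j (if j == i then p ord0 i + W else q ord0 j + (c j).+1%:R * h)); split => /=.
  - move=> j; rewrite !mxE; case: ifP => _; first by lra.
    by rewrite lerD2l ler_pM2r // ler_nat.
  - rewrite /box_vol le_eqVlt; apply/orP; left; apply/eqP; apply: eq_bigr => j _.
    rewrite /g !mxE; case: ifP => /eqP hj; first by subst j; rewrite hci /=; ring.
    by rewrite /h; ring.
  - move=> x hx _ hxc j; rewrite !mxE; case: eqP => [->|/eqP hj]; last exact: hxc.
    suff : `|x ord0 i - p ord0 i| <= W.
      by rewrite ler_norml => /andP[h1 h2]; apply/andP; split; lra.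
    apply: le_trans (hlip _ _ hx hp) _; rewrite /W; apply: ler_wpM2l => //.
    apply: (@le_trans _ _ (\sum_(j | j != i) h)).
      by apply: ler_sum => l hl; apply: abs_cellk (hxc l hl) (hpc l hl).
    apply: (@le_trans _ _ (\sum_(l < n) h)).
      rewrite big_mkcond /=; apply: ler_sum => l _.
      by case: ifP => _ //; apply: ltW.
    by rewrite sumr_const card_ord mulr_natl.
have [F hF'] := choice hF.
apply: (@covers_fin _ _ n_gt0 _ _ _ (fun c => (F c).1) (fun c => (F c).2)).
- by move=> c j; case: (hF' c).
- move=> x hx.
  have hk : forall j, exists k : 'I_K,
      q ord0 j + k%:R * h <= x ord0 j <= q ord0 j + k.+1%:R * h.
    by move=> j; apply: cell_idx => //; have /cubeP := hAQ _ hx; apply.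
  have [k hk'] := fin_all_exists hk.
  pose c : {ffun 'I_n -> 'I_K} := [ffun j => if j == i then Ordinal K0 else k j].
  exists c; case: (hF' c) => _ _; apply => //; first by rewrite /c ffunE eqxx.
  by move=> j /negPf hj; rewrite /c ffunE hj; apply: hk'.
apply: (@le_trans _ _ (\sum_(c : {ffun 'I_n -> 'I_K}) \prod_j g j (c j))).
  by apply: ler_sum => c _; case: (hF' c).
rewrite -(bigA_distr_bigA (fun j k => g j k)) /= (bigD1 i) //=.
have -> : \sum_(k < K) g i k = 2 * W.
  rewrite (bigD1 (Ordinal K0)) //= /g eqxx /= big1 ?addr0 // => k hk.
  case: ifP => // /eqP hk0; exfalso; move/negP: hk; apply; apply/eqP/val_inj.
  by rewrite /= hk0.
have -> : \prod_(j | j != i) \sum_(k < K) g j k = s ^+ n.-1.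
  rewrite (eq_bigr (fun _ => s)); last first.
    move=> j /negPf hj; rewrite /g hj sumr_const card_ord /h -mulr_natl.
    by field; rewrite pnatr_eq0 -lt0n.
  by rewrite prodr_const cardC1 card_ord.
apply: le_trans hK; rewrite le_eqVlt; apply/orP; left; apply/eqP; rewrite /W /h.
by field; rewrite pnatr_eq0 -lt0n.
Qed.


Lemma le_sum_abs (B : 'I_n -> R) j : B j <= \sum_k `|B k|.
Proof.
apply: le_trans (ler_norm _) _; rewrite (bigD1 j) //= lerDl.
by apply: sumr_ge0 => k _.
Qed.

Lemma cube_upd q s x i t : cube q s x -> q ord0 i <= t <= q ord0 i + s ->
  cube q s (upd x i t).
Proof.
move=> /cubeP hx ht; apply/cubeP => j; rewrite mxE; case: eqP => [->|_] //.
Qed.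

Lemma G_null d f (D : 'I_n -> 'rV[R]_n -> R) (i : 'I_n) (M del : R) :
  0 <= M -> 0 < del -> (forall j, PF d (D j) /\ pder j f (D j)) ->
  bnull [set x : 'rV[R]_n | (forall j, `|x ord0 j| <= M) /\ f x = 0 /\ del <= `|D i x|].
Proof.
move=> M0 d0 hD.
set G := [set x | _].
pose q : 'rV[R]_n := \row_j (- (M + 1)).
pose s := 2 * (M + 1).
have s0 : 0 < s by rewrite /s; lra.
have hQ y : cube q s y -> forall j, `|y ord0 j| <= M + 1.
  move=> /cubeP hy j; have := hy j; rewrite /q /s mxE => /andP[h1 h2].
  by rewrite ler_norml; apply/andP; split; lra.
have [B hB] := fin_all_exists (fun j => PF_bound (M + 1) (hD j).1).
pose L := \sum_k `|B k|.
have L0 : 0 <= L by apply: sumr_ge0.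
have hL j y : box q (\row_j (q ord0 j + s)) y -> `|D j y| <= L.
  by move=> hy; apply: le_trans (le_sum_abs B j); apply: hB; apply: hQ.
have [E hE] := fin_all_exists (fun j => PF_deriv (hD i).1 j).
have hE1 j : PF d.-1 (E j) by case: (hE j).
have hE3 j : pder j (D i) (E j) by case: (hE j).
have [B' hB'] := fin_all_exists (fun j => PF_bound (M + 1) (hE1 j)).
pose L' := \sum_k `|B' k|.
have L'0 : 0 <= L' by apply: sumr_ge0.
have lipf := @lip_box _ _ f q (\row_j (q ord0 j + s)) L
   (fun j => ex_intro _ (D j) (conj (hD j).2 (hL j))).
have lipD := @lip_box _ _ (D i) q (\row_j (q ord0 j + s)) L'
   (fun j => ex_intro _ (E j) (conj (hE3 j) (fun y hy => le_trans (hB' j y (hQ y hy)) (le_sum_abs B' j)))).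
have [K [K0 hK]] := exists_K (2 * L' * n%:R * s / del) ltr01.
pose h := s / K%:R.
have K0' : 0 < K%:R :> R by rewrite ltr0n.
have h0 : 0 < h by rewrite divr_gt0.
have hLh : L' * (n%:R * h) <= del / 2.
  move: hK; rewrite ler_pdivrMr // mul1r ler_pdivrMr // /h.
  set A := L' * _; have -> : A = (L' * n%:R * s) / K%:R by rewrite /A; field; rewrite gt_eqF.
  rewrite ler_pdivrMr // => hh.
  have -> : del / 2 * K%:R = (K%:R * del) / 2 by ring.
  rewrite ler_pdivlMr //; apply: le_trans hh; rewrite le_eqVlt; apply/orP; left; apply/eqP; ring.
have Kh : K%:R * h = s by rewrite /h; field; rewrite gt_eqF.
pose qc (c : {ffun 'I_n -> 'I_K}) : 'rV[R]_n := \row_j (q ord0 j + (c j)%:R * h).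
have cellQ c y : cube (qc c) h y -> cube q s y.
  move/cubeP => hy; apply/cubeP => j; have := hy j; rewrite mxE => /andP[h1 h2].
  have hc0 : 0 <= (c j)%:R * h by rewrite mulr_ge0 // ltW.
  have hc1 : (c j)%:R * h + h <= s.
    rewrite -Kh -[X in _ + X]mul1r -mulrDl ler_pM2r // natr1 ler_nat.
    exact: ltn_ord.
  by apply/andP; split; lra.
apply: (@bnull_sub _ _ _ (\bigcup_(c : {ffun 'I_n -> 'I_K}) (G `&` cube (qc c) h))).
  move=> x hx.
  have hxQ : cube q s x.
    apply/cubeP => j; have := (hx.1 j); rewrite /q /s mxE ler_norml => /andP[h1 h2].
    by apply/andP; split; lra.
  have hk : forall j, exists k : 'I_K,
      q ord0 j + k%:R * h <= x ord0 j <= q ord0 j + k.+1%:R * h.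
    by move=> j; apply: cell_idx => //; move/cubeP: hxQ; apply.
  have [k hk'] := fin_all_exists hk.
  exists [ffun j => k j] => //; split => //; apply/cubeP => j.
  by rewrite /qc mxE ffunE; have := hk' j; rewrite -natr1 mulrDl mul1r addrA.
apply: (bnull_bigcup n_gt0) => c.
case: (pselect (exists p, G p /\ cube (qc c) h p)) => [[p [hp hpc]]|hn]; last first.
  by apply: (bnull_set0 n_gt0) => x [hx hxc]; apply: hn; exists x.
have hdel y : cube (qc c) h y -> del / 2 <= `|D i y|.
  move=> hy.
  have h1 := lipD y p (cellQ _ _ hy) (cellQ _ _ hpc).
  have h2 : \sum_j `|y ord0 j - p ord0 j| <= n%:R * h.
    apply: (@le_trans _ _ (\sum_(j < n) h)).
      apply: ler_sum => j _; move/cubeP: hy => /(_ j); move/cubeP: hpc => /(_ j).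
      by rewrite mxE => hpj hyj; apply: abs_cell hyj hpj.
    by rewrite sumr_const card_ord mulr_natl.
  have h3 : L' * \sum_j `|y ord0 j - p ord0 j| <= del / 2.
    by apply: le_trans hLh; apply: ler_wpM2l.
  have h4 := ler_normB (D i y) (D i y - D i p).
  rewrite opprB addrC subrK in h4.
  have h5 := hp.2.2.
  lra.
apply: (@bnull_lipgraph _ (qc c) h (2 * L / del) i) => //.
- by apply: divr_ge0; [apply: mulr_ge0 | apply: ltW].
move=> x y [hx hxc] [hy hyc].
have [c' [hc' e]] := mvt_coord x (y ord0 i) (hD i).2.
have hyi := (cubeP _ _ _).1 hyc i.
have hxi := (cubeP _ _ _).1 hxc i.
have hz : cube (qc c) h (upd x i (y ord0 i)) by apply: cube_upd.
have hxi' : cube (qc c) h (upd x i c').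
  apply: cube_upd => //; move: hyi hxi; rewrite mxE => /andP[h1 h2] /andP[h3 h4].
  by case: hc' => /andP[h5 h6]; apply/andP; split; lra.
have h1 : del / 2 * `|x ord0 i - y ord0 i| <= `|f (upd x i (y ord0 i))|.
  rewrite -[f (upd x i _)]subr0 -{1}hx.2.1 e normrM distrC.
  by apply: ler_wpM2r => //; apply: hdel.
have h2 : `|f (upd x i (y ord0 i))| <= L * \sum_(j | j != i) `|x ord0 j - y ord0 j|.
  rewrite -[f (upd x i _)]subr0 -{1}hy.2.1.
  apply: le_trans (lipf _ _ (cellQ _ _ hz) (cellQ _ _ hyc)) _.
  rewrite (bigD1 i) //= upd_i subrr normr0 add0r le_eqVlt; apply/orP; left; apply/eqP.
  congr (_ * _); apply: eq_bigr => j /negPf hj; rewrite mxE hj //.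
have hd2 : 0 < del / 2 by apply: divr_gt0.
rewrite -(ler_pM2l hd2); apply: le_trans (le_trans h1 h2) _.
rewrite le_eqVlt; apply/orP; left; apply/eqP; field; lra.
Qed.


Theorem PF_null d f : PF d f -> (exists x0, f x0 <> 0) -> bnull [set x : 'rV[R]_n | f x = 0].
Proof.
elim: d f => [|d IH] f.
  case=> c hc [x0 hx0]; apply: (bnull_set0 n_gt0) => x /= hx; apply: hx0.
  by rewrite hc -(hc x).
move=> hf [x0 hx0].
have [D hD] := fin_all_exists (fun i => PF_deriv hf i).
have hD' j : PF d (D j) /\ pder j f (D j) by case: (hD j).
case: (pselect (exists i y, D i y <> 0)) => [[i [y hy]] | hn].
  have hZ := IH (D i) (hD' i).1 (ex_intro _ y hy).
  apply: (@bnull_sub _ _ _ ([set x | D i x = 0] `|` \bigcup_(m : nat)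
     [set x : 'rV[R]_n | (forall j, `|x ord0 j| <= m%:R) /\ f x = 0 /\ (m.+1%:R)^-1 <= `|D i x|])).
    move=> x /= hfx; case: (eqVneq (D i x) 0) => [h0|hne]; [by left | right].
    have hDp : 0 < `|D i x| by rewrite normr_gt0.
    pose X := \sum_j `|x ord0 j| + `|D i x|^-1.
    have X0 : 0 <= X by rewrite addr_ge0 ?invr_ge0 // sumr_ge0.
    have hX := archi_boundP X0.
    exists (Num.Def.archi_bound X) => //; split; [|split => //].
      move=> j; apply: ltW; apply: le_lt_trans hX.
      apply: le_trans (le_sum_abs (fun k => `|x ord0 k|) j) _.
      under eq_bigr do rewrite normr_id.
      by rewrite lerDl invr_ge0.
    rewrite -[X in _ <= X]invrK lef_pV2 ?posrE ?invr_gt0 ?ltr0n //.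
    apply: ltW; apply: (@le_lt_trans _ _ X); first by rewrite lerDr sumr_ge0.
    by apply: lt_le_trans hX _; rewrite ler_nat.
  apply: (bnull_setU n_gt0) => //; apply: (bnull_bigcup n_gt0) => m.
  by apply: (@G_null d f D i m%:R (m.+1%:R)^-1) => //; rewrite invr_gt0 ltr0n.
apply: (bnull_set0 n_gt0) => x /= hx; apply: hx0.
pose M := \sum_j (`|x ord0 j| + `|x0 ord0 j|).
have hb : forall z : 'rV[R]_n, (z = x \/ z = x0) -> box (\row_j (- M)) (\row_j M) z.
  move=> z hz j; rewrite !mxE.
  have : `|z ord0 j| <= M.
    apply: (@le_trans _ _ (`|x ord0 j| + `|x0 ord0 j|)).
      by case: hz => ->; rewrite ?lerDl ?lerDr.
    rewrite /M (bigD1 j) //= lerDl; apply: sumr_ge0 => k _; exact: addr_ge0.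
  by rewrite ler_norml.
have hz j y : `|D j y| <= 0.
  case: (eqVneq (D j y) 0) => [->|hne]; first by rewrite normr0.
  by exfalso; apply: hn; exists j, y; apply/eqP.
have := @lip_box _ _ f (\row_j (- M)) (\row_j M) 0
  (fun j => ex_intro _ (D j) (conj (hD' j).2 (fun y _ => hz j y))) x x0 (hb x (or_introl erefl)) (hb x0 (or_intror erefl)).
move=> h; rewrite mul0r normr_le0 subr_eq0 in h.
by rewrite -(eqP h).
Qed.

End Grid.

Lemma minor_exists (F : fieldType) N m (M : 'M[F]_(N, m)) :
  exists (f : 'I_(\rank M) -> 'I_N) (g : 'I_(\rank M) -> 'I_m),
    \det (\matrix_(a, b) M (f b) (g a)) != 0.
Proof.
pose B := rowsub (maxrankfun M) M.
have hB : row_free B by apply: maxrowsub_free.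
have hBT : row_full B^T by rewrite /row_full mxrank_tr.
pose G := fullrankfun hBT.
exists (maxrankfun M), G.
have hu := fullrowsub_unit hBT.
have -> : \matrix_(a, b) M (maxrankfun M b) (G a) = rowsub G B^T.
  by apply/matrixP => a b; rewrite !mxE.
by rewrite -unitfE -unitmxE.
Qed.

Lemma minor_rank (F : fieldType) N m r (M : 'M[F]_(N, m)) (f : 'I_r -> 'I_N)
  (g : 'I_r -> 'I_m) : \det (\matrix_(a, b) M (f b) (g a)) != 0 -> (r <= \rank M)%N.
Proof.
have -> : \matrix_(a, b) M (f b) (g a) = rowsub g (rowsub f M)^T.
  by apply/matrixP => a b; rewrite !mxE.
rewrite -unitfE -unitmxE => /mxrank_unit <-.
apply: leq_trans (mxrankS (rowsub_sub _ _)) _.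
by rewrite mxrank_tr; apply: mxrankS; apply: rowsub_sub.
Qed.

Lemma exists_max (T : Type) (S : set T) (h : T -> nat) B :
  (exists x, S x) -> (forall x, S x -> (h x <= B)%N) ->
  exists x, S x /\ forall y, S y -> (h y <= h x)%N.
Proof.
move=> [x0 hx0] hB; apply: contrapT => hn.
have step : forall k, exists x, S x /\ (k <= h x)%N.
  elim=> [|k [x [hx hk]]]; first by exists x0.
  have : ~ (forall y, S y -> (h y <= h x)%N) by move=> hy; apply: hn; exists x.
  move=> /existsNP [y] /not_implyP [hy /negP]; rewrite -ltnNge => hxy.
  by exists y; split => //; apply: leq_ltn_trans hxy.
have [x [hx hk]] := step B.+1.
by move: (hB x hx); rewrite leqNgt hk.
Qed.

Lemma PFany_minor (R : realType) n N m (P : 'M[mpoly.mpoly n R]_(N, m)) r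
  (f : 'I_r -> 'I_N) (g : 'I_r -> 'I_m) :
  PFany (fun xi => \det (\matrix_(a, b) (polymx_eval P xi) (f b) (g a))).
Proof.
have h : PFany (fun xi : 'rV[R]_n => \sum_(s : 'S_r) (-1) ^+ s *
    \prod_i mpoly.meval (fun j : 'I_n => xi ord0 j) (P (f (s i)) (g i))).
  apply: PFany_sum => s; apply: PFany_mul; first exact: PFany_cst.
  by apply: PFany_prod => i; apply: PFany_meval.
apply: (PFany_ext h) => xi; rewrite /determinant; apply: eq_bigr => s _.
by congr (_ * _); apply: eq_bigr => i _; rewrite /polymx_eval !mxE.
Qed.


Unset Implicit Arguments.

Theorem lemma2p2 (R : realType) (n N1 m1 N2 m2 : nat)
    (S : set 'rV[R]_n)
    (P : 'M[mpoly.mpoly n R]_(N1, m1)) (Q : 'M[mpoly.mpoly n R]_(N2, m2)) :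
  (0 < lebesgue_outer S)%E ->
  (exists s : nat, forall xi, S xi -> (polymx_rank P xi + polymx_rank Q xi)%N = s) ->
  (exists rP : nat, forall xi, S xi -> polymx_rank P xi = rP) /\
  (exists rQ : nat, forall xi, S xi -> polymx_rank Q xi = rQ).
Proof.
move=> hpos [s hs].
case: (pselect (exists xi, S xi)) => [hne|hemp]; last first.
  by split; exists 0%N => xi hxi; exfalso; apply: hemp; exists xi.
case: n S P Q hpos hs hne => [|n'] S P Q hpos hs hne.
  have [x0 hx0] := hne.
  split; [exists (polymx_rank P x0) | exists (polymx_rank Q x0)] => xi _;
    by rewrite (thinmx0 xi) (thinmx0 x0).
have n0 : (0 < n'.+1)%N by [].
have [xP [hxP hmaxP]] := exists_max (h := polymx_rank P) hne
   (fun xi _ => rank_leq_row (polymx_eval P xi)).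
have [xQ [hxQ hmaxQ]] := exists_max (h := polymx_rank Q) hne
   (fun xi _ => rank_leq_row (polymx_eval Q xi)).
have [fP [gP hPdet]] := minor_exists (polymx_eval P xP).
have [fQ [gQ hQdet]] := minor_exists (polymx_eval Q xQ).
have [dP hdP] := PFany_minor P fP gP.
have [dQ hdQ] := PFany_minor Q fQ gQ.
have nP := PF_null n0 hdP (ex_intro _ xP (fun e => (elimN eqP hPdet) e)).
have nQ := PF_null n0 hdQ (ex_intro _ xQ (fun e => (elimN eqP hQdet) e)).
have hU := bnull_setU n0 _ _ nP nQ.
have [x1 [hx1 [h1 h2]]] : exists x1, S x1 /\
    \det (\matrix_(a, b) (polymx_eval P x1) (fP b) (gP a)) <> 0 /\
    \det (\matrix_(a, b) (polymx_eval Q x1) (fQ b) (gQ a)) <> 0.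
  apply: contrapT => hn.
  suff hS : bnull S by case: (bnull_outer _ hS hpos).
  apply: (bnull_sub _ _ _ hU) => x hx.
  case: (pselect (\det (\matrix_(a, b) (polymx_eval P x) (fP b) (gP a)) = 0)) => [e|e].
    by left.
  case: (pselect (\det (\matrix_(a, b) (polymx_eval Q x) (fQ b) (gQ a)) = 0)) => [e'|e'].
    by right.
  by exfalso; apply: hn; exists x.
have rP1 := minor_rank (introN eqP h1).
have rQ1 := minor_rank (introN eqP h2).
have hm1 := hmaxP x1 hx1.
have hm2 := hmaxQ x1 hx1.
have hs1 := hs x1 hx1.
rewrite /polymx_rank in hm1 hm2 hs1 hmaxP hmaxQ hs *.
split; [exists (\rank (polymx_eval P xP)) | exists (\rank (polymx_eval Q xQ))] => xi hxi;
  have := hs xi hxi; have := hmaxP xi hxi; have := hmaxQ xi hxi; lia.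
Qed.
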